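(* Let $K$ be a compact convex polytope of dimension $d$ in $\mathbb{R}^d$ with $N$ faces. Then $K$ is a finite intersection $$K=\bigcap_{j=1}^M S_j,$$ where each $S_j$ is either a $d$-dimensional simplex or a strip whose orthogonal cross-section is a lower-dimensional simplex. Moreover, each (codimension-one) face of each $S_j$ contains a face of $K$.
   Context: Faces of $K$ mean faces of codimension $1$. A strip in $\mathbb{R}^d$ is a set $L^{-1}(A)$, where $L\colon\mathbb{R}^d\to\mathbb{R}^j$ is a linear map of rank $j$, $j\in\{1,\dots,d\}$, and $A\subset\mathbb{R}^j$ is a compact convex set of dimension $j$. After an orthogonal change of coordinates the strip is $A\times\mathbb{R}^{d-j}$, and $A$ is its ($j$-dimensional) orthogonal cross-section. ''Lower-dimensional'' means $j<d$. When $A$ is a simplex, the faces of the strip are the sets $L^{-1}(G)$ with $G$ a facet of $A$. *)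

(* Defs.v *)
From mathcomp Require Import all_boot all_order all_algebra.
From mathcomp Require Import reals.
Set Implicit Arguments. Unset Strict Implicit. Unset Printing Implicit Defensive.
Import Order.TTheory GRing.Theory Num.Theory.
Local Open Scope ring_scope.

Section Defs.
Variable R : realType.

Definition dotv n (a x : 'rV[R]_n) : R := \sum_(i < n) a 0 i * x 0 i.

Definition conv n m (p : 'I_m -> 'rV[R]_n) : 'rV[R]_n -> Prop :=
  fun x => exists w : 'I_m -> R,
    (forall i, 0 <= w i) /\ \sum_(i < m) w i = 1 /\ x = \sum_(i < m) w i *: p i.

Definition aff_indep n m (p : 'I_m -> 'rV[R]_n) : Prop :=
  forall c : 'I_m -> R, \sum_(i < m) c i = 0 -> \sum_(i < m) c i *: p i = 0 ->
    forall i, c i = 0.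

(* K contains k+1 affinely independent points, i.e. dim aff K >= k *)
Definition dim_ge n (k : nat) (K : 'rV[R]_n -> Prop) : Prop :=
  exists p : 'I_k.+1 -> 'rV[R]_n, aff_indep p /\ forall i, K (p i).

Definition polytope n (K : 'rV[R]_n -> Prop) : Prop :=
  exists m (p : 'I_m -> 'rV[R]_n), forall x, K x <-> conv p x.

Definition full_simplex n (S : 'rV[R]_n -> Prop) : Prop :=
  exists p : 'I_n.+1 -> 'rV[R]_n, aff_indep p /\ forall x, S x <-> conv p x.

(* facet (face of codimension 1) of a convex set K in R^n:
   intersection of K with a supporting hyperplane, of dimension n-1
   (i.e. containing n affinely independent points) *)
Definition facet n (K F : 'rV[R]_n -> Prop) : Prop :=
  exists (a : 'rV[R]_n) (b : R), a != 0 /\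
    (forall x, K x -> dotv a x <= b) /\
    (forall x, F x <-> (K x /\ dotv a x = b)) /\
    (exists q : 'I_n -> 'rV[R]_n, aff_indep q /\ forall i, F (q i)).

Definition subset n (A B : 'rV[R]_n -> Prop) : Prop := forall x, A x -> B x.

(* S is a d-dimensional simplex each of whose facets contains a facet of K,
   or a strip L^{-1}(A) with A a j-simplex in R^j, 0 < j < d, L linear of
   rank j, such that each face L^{-1}(G) (G a facet of A) contains a facet
   of K. *)
Definition good_piece d (K S : 'rV[R]_d -> Prop) : Prop :=
  (full_simplex S /\
     forall F, facet S F -> exists F', facet K F' /\ subset F' F)
  \/
  (exists (j : nat) (L : 'M[R]_(d, j)) (A : 'rV[R]_j -> Prop),
     (0 < j)%N /\ (j < d)%N /\ \rank L = j /\ full_simplex A /\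
     (forall x, S x <-> A (x *m L)) /\
     forall G, facet A G ->
       exists F', facet K F' /\ subset F' (fun x => G (x *m L))).

End Defs.

(* Main.v *)
Require Import Defs.
From mathcomp Require Import all_boot all_order all_algebra.
From mathcomp Require Import reals.
From Stdlib Require Import Classical.
From mathcomp Require Import ring lra.
Set Implicit Arguments. Unset Strict Implicit. Unset Printing Implicit Defensive.
Import Order.TTheory GRing.Theory Num.Theory.
Local Open Scope ring_scope.
Section P1.
Variable R : realType.
Implicit Types n m k : nat.

Lemma dotvC n (a x : 'rV[R]_n) : dotv a x = dotv x a.
Proof. by apply: eq_bigr => i _; rewrite mulrC. Qed.

Lemma dotvDl n (a b x : 'rV[R]_n) : dotv (a + b) x = dotv a x + dotv b x.
Proof. by rewrite /dotv -big_split; apply: eq_bigr => i _; rewrite mxE mulrDl. Qed.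

Lemma dotvZl n c (a x : 'rV[R]_n) : dotv (c *: a) x = c * dotv a x.
Proof. by rewrite /dotv mulr_sumr; apply: eq_bigr => i _; rewrite mxE mulrA. Qed.

Lemma dotvNl n (a x : 'rV[R]_n) : dotv (- a) x = - dotv a x.
Proof. by rewrite -scaleN1r dotvZl mulN1r. Qed.

Lemma dotvBl n (a b x : 'rV[R]_n) : dotv (a - b) x = dotv a x - dotv b x.
Proof. by rewrite dotvDl dotvNl. Qed.

Lemma dotv0l n (x : 'rV[R]_n) : dotv 0 x = 0.
Proof. by rewrite /dotv big1 // => i _; rewrite mxE mul0r. Qed.

Lemma dotv_suml n m (F : 'I_m -> 'rV[R]_n) x :
  dotv (\sum_(i < m) F i) x = \sum_(i < m) dotv (F i) x.
Proof.
rewrite /dotv exchange_big /=; apply: eq_bigr => j _.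
by rewrite summxE mulr_suml.
Qed.

Lemma dotvDr n (a b x : 'rV[R]_n) : dotv x (a + b) = dotv x a + dotv x b.
Proof. by rewrite !(dotvC x) dotvDl. Qed.
Lemma dotvZr n c (a x : 'rV[R]_n) : dotv x (c *: a) = c * dotv x a.
Proof. by rewrite !(dotvC x) dotvZl. Qed.
Lemma dotvNr n (a x : 'rV[R]_n) : dotv x (- a) = - dotv x a.
Proof. by rewrite !(dotvC x) dotvNl. Qed.
Lemma dotvBr n (a b x : 'rV[R]_n) : dotv x (a - b) = dotv x a - dotv x b.
Proof. by rewrite !(dotvC x) dotvBl. Qed.
Lemma dotv0r n (x : 'rV[R]_n) : dotv x 0 = 0.
Proof. by rewrite dotvC dotv0l. Qed.
Lemma dotv_sumr n m (F : 'I_m -> 'rV[R]_n) x :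
  dotv x (\sum_(i < m) F i) = \sum_(i < m) dotv x (F i).
Proof. by rewrite dotvC dotv_suml; apply: eq_bigr => i _; rewrite dotvC. Qed.

Lemma dotv_comb n m (w : 'I_m -> R) (p : 'I_m -> 'rV[R]_n) x :
  dotv x (\sum_(i < m) w i *: p i) = \sum_(i < m) w i * dotv x (p i).
Proof. by rewrite dotv_sumr; apply: eq_bigr => i _; rewrite dotvZr. Qed.

Lemma dotv_ge0 n (a : 'rV[R]_n) : 0 <= dotv a a.
Proof. by apply: sumr_ge0 => i _; rewrite -expr2 sqr_ge0. Qed.

Lemma dotv_eq0 n (a : 'rV[R]_n) : dotv a a = 0 -> a = 0.
Proof.
move=> h; apply/rowP => i; rewrite mxE.
have /eqP := h; rewrite psumr_eq0 => [/allP H|j _]; last by rewrite -expr2 sqr_ge0.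
have := H i (mem_index_enum i); rewrite /= -expr2 sqrf_eq0 => /eqP //.
Qed.

Lemma dotv_gt0 n (a : 'rV[R]_n) : a != 0 -> 0 < dotv a a.
Proof.
move=> an0; rewrite lt_neqAle dotv_ge0 andbT eq_sym; apply/eqP => /dotv_eq0 h.
by rewrite h eqxx in an0.
Qed.

Lemma dotv_row_mx n1 n2 (a1 b1 : 'rV[R]_n1) (a2 b2 : 'rV[R]_n2) :
  dotv (row_mx a1 a2) (row_mx b1 b2) = dotv a1 b1 + dotv a2 b2.
Proof.
by rewrite /dotv big_split_ord /=; congr (_ + _); apply: eq_bigr => i _;
  rewrite ?row_mxEl ?row_mxEr.
Qed.

Lemma dotv_const1 (s t : R) : dotv (const_mx s : 'rV[R]_1) (const_mx t) = s * t.
Proof. by rewrite /dotv big_ord1 !mxE. Qed.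

Definition liftv n (x : 'rV[R]_n) : 'rV[R]_(n + 1) := row_mx x (const_mx 1).

Lemma dotv_lift n (u x : 'rV[R]_n) s :
  dotv (row_mx u (const_mx s)) (liftv x) = dotv u x + s.
Proof. by rewrite /liftv dotv_row_mx dotv_const1 mulr1. Qed.

Lemma rV1_const (M : 'rV[R]_1) : M = const_mx (M 0 0).
Proof. by apply/rowP => i; rewrite mxE (ord1 i). Qed.

Lemma split_rV n (w : 'rV[R]_(n + 1)) :
  w = row_mx (lsubmx w) (const_mx (rsubmx w 0 0)).
Proof. by rewrite -rV1_const hsubmxK. Qed.

Definition ext (T : Type) k (q : 'I_k -> T) (e : T) (i : 'I_k.+1) : T :=
  oapp q e (insub (val i) : option 'I_k).

Lemma ext_widen T k (q : 'I_k -> T) e j : ext q e (widen_ord (leqnSn k) j) = q j.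
Proof. by rewrite /ext /= insubT /=; [apply: ltn_ord | move=> h; congr q; apply: val_inj]. Qed.

Lemma ext_max T k (q : 'I_k -> T) e : ext q e ord_max = e.
Proof. by rewrite /ext insubF //= ltnn. Qed.

Lemma sum_ext k (q : 'I_k -> R) e : \sum_(i < k.+1) ext q e i = \sum_(j < k) q j + e.
Proof. by rewrite big_ord_recr /= ext_max; congr (_ + _); apply: eq_bigr => j _; rewrite ext_widen. Qed.

Lemma aff_indep_ext n k (q : 'I_k -> 'rV[R]_n) e u v :
  aff_indep q -> (forall j, dotv u (q j) = v) -> dotv u e != v ->
  aff_indep (ext q e).
Proof.
move=> hq hu he c hs hv.
rewrite big_ord_recr /= in hs; rewrite big_ord_recr /= ext_max in hv.
have hv' : \sum_(j < k) c (widen_ord (leqnSn k) j) *: q j + c ord_max *: e = 0.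
  by rewrite -[RHS]hv; congr (_ + _); apply: eq_bigr => j _; rewrite ext_widen.
have cm : c ord_max = 0.
  have := congr1 (dotv u) hv'; rewrite dotv0r dotvDr dotv_comb dotvZr.
  under eq_bigr do rewrite hu.
  rewrite -mulr_suml.
  have -> : \sum_(i < k) c (widen_ord (leqnSn k) i) = - c ord_max.
    by apply/eqP; rewrite -subr_eq0 opprK hs.
  move=> h; apply/eqP; move: he; apply: contraR => cn0.
  have : c ord_max * (dotv u e - v) = 0 by rewrite mulrBr -h; ring.
  by move/eqP; rewrite mulf_eq0 (negbTE cn0) /= subr_eq0.
have hq' := hq (fun j => c (widen_ord (leqnSn k) j)).
rewrite cm addr0 in hs; rewrite cm scale0r addr0 in hv'.
have H := hq' hs hv'.
move=> i; case: (unliftP ord_max i) => [j ->|-> //].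
have -> : lift ord_max j = widen_ord (leqnSn k) j by apply: val_inj; rewrite /= /bump leqNgt ltn_ord.
exact: H.
Qed.

Definition rowsmx n k (z : 'I_k -> 'rV[R]_n) : 'M[R]_(k, n) := \matrix_(i, j) z i 0 j.

Lemma rowsmx_mul n k (z : 'I_k -> 'rV[R]_n) (w : 'rV[R]_n) i :
  (rowsmx z *m w^T) i 0 = dotv (z i) w.
Proof. by rewrite mxE /dotv; apply: eq_bigr => j _; rewrite !mxE. Qed.

Lemma mul_rowsmx n k (z : 'I_k -> 'rV[R]_n) (c : 'rV[R]_k) :
  c *m rowsmx z = \sum_(i < k) c 0 i *: z i.
Proof. apply/rowP => j; rewrite !mxE summxE; apply: eq_bigr => i _; rewrite !mxE. done. Qed.

Lemma row_free_of m n (B : 'M[R]_(m, n)) :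
  (forall c : 'rV_m, c *m B = 0 -> c = 0) -> row_free B.
Proof.
move=> h; rewrite -kermx_eq0; apply/eqP/row_matrixP => i.
rewrite row0; apply: h; by rewrite -row_mul mulmx_ker row0.
Qed.

Lemma hyp_trivial n (q : 'I_n.+1 -> 'rV[R]_n) (u : 'rV[R]_n) v :
  aff_indep q -> (forall i : 'I_n.+1, dotv u (q i) = v) -> u = 0 /\ v = 0.
Proof.
move=> hq hu.
pose B := rowsmx (fun i => liftv (q i)).
have rf : row_free B.
  apply: row_free_of => c; rewrite mul_rowsmx => hc.
  have hs : \sum_(i < n.+1) c 0 i = 0.
    have /rowP/(_ (rshift n 0)) := hc; rewrite summxE mxE => h; rewrite -[RHS]h.
    by apply: eq_bigr => i _; rewrite mxE /liftv row_mxEr !mxE mulr1.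
  have hv : \sum_(i < n.+1) c 0 i *: q i = 0.
    apply/rowP => j; rewrite [RHS]mxE; have /rowP/(_ (lshift 1 j)) := hc; rewrite summxE mxE => h; rewrite -[RHS]h.
    rewrite summxE; apply: eq_bigr => i _; rewrite [LHS]mxE [RHS]mxE /liftv row_mxEl //.
  have H := hq (fun i => c 0 i) hs hv.
  by apply/rowP => i; rewrite mxE H.
have rfu : row_full B.
  by rewrite /row_full; move: rf; rewrite /row_free => /eqP ->; rewrite addn1.
have [C hC] := row_fullP rfu.
pose w := row_mx u (const_mx (- v)) : 'rV[R]_(n + 1).
have hB : B *m w^T = 0.
  apply/colP => i; rewrite rowsmx_mul dotvC dotv_lift hu mxE; ring.
have : w^T = 0 by rewrite -[w^T]mul1mx -hC -mulmxA hB mulmx0.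
move/(congr1 trmx); rewrite trmxK trmx0 => /eqP; rewrite row_mx_eq0 => /andP[/eqP -> /eqP].
move/rowP/(_ 0); rewrite !mxE => /eqP; rewrite oppr_eq0 => /eqP ->; done.
Qed.

Lemma kernel_exists n k (z : 'I_k -> 'rV[R]_n) :
  (k < n)%N -> exists w : 'rV[R]_n, w != 0 /\ forall j, dotv w (z j) = 0.
Proof.
move=> kn; pose Z := rowsmx z.
have rk : (0 < \rank (kermx Z^T))%N.
  rewrite mxrank_ker mxrank_tr subn_gt0.
  by apply: leq_ltn_trans (rank_leq_row Z) kn.
have : kermx Z^T != 0 by rewrite -mxrank_eq0 -lt0n.
have [->|[r hr]] : kermx Z^T = 0 \/ exists r, row r (kermx Z^T) != 0.
  - case: (classic (exists r, row r (kermx Z^T) != 0)) => [|h]; [by right|left].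
    by apply/row_matrixP => r; rewrite row0; apply/eqP/negPn/negP => H; apply: h; exists r.
  - by rewrite eqxx.
move=> _; exists (row r (kermx Z^T)); split => // j.
have : row r (kermx Z^T) *m Z^T = 0 by rewrite -row_mul mulmx_ker row0.
move/rowP/(_ j); rewrite !mxE => <-; rewrite /dotv; apply: eq_bigr => i _.
by rewrite !mxE.
Qed.

Lemma ratio_test (I : finType) (al de : I -> R) :
  (forall i, 0 <= al i) -> (exists i, 0 < de i) ->
  exists r s, [/\ 0 < de r, 0 <= s, al r = s * de r & forall i, s * de i <= al i].
Proof.
move=> hal [i0 hi0].
have := @arg_minP _ R I i0 (fun i => 0 < de i) (fun i => al i / de i) hi0.
case=> r hr hmin; exists r, (al r / de r); split => //.
- by rewrite divr_ge0 // ltW.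
- by rewrite mulrVK // unitfE gt_eqF.
- move=> i; case: (ltP 0 (de i)) => hi.
    by rewrite -ler_pdivlMr // hmin.
  by apply: le_trans (hal i); rewrite mulr_ge0_le0 // divr_ge0 // ltW.
Qed.

Lemma pos_lower (I : finType) (s : I -> R) :
  (forall i, 0 < s i) -> exists e, 0 < e /\ forall i, e <= s i.
Proof.
move=> hs; pose S := 1 + \sum_i (s i)^-1.
have S0 : 0 < S by rewrite ltr_pwDl // sumr_ge0 // => i _; rewrite invr_ge0 ltW.
exists S^-1; split; first by rewrite invr_gt0.
move=> i; rewrite -[s i]invrK lef_pV2 ?posrE ?invr_gt0 //.
rewrite /S (bigD1 i) //= addrCA ler_wpDr // addr_ge0 // sumr_ge0 // => j _.
by rewrite invr_ge0 ltW.
Qed.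

End P1.

Section P2.
Variable R : realType.

Lemma ord_cases m (i : 'I_m.+1) :
  i = ord_max \/ exists j : 'I_m, i = widen_ord (leqnSn m) j.
Proof.
case: (unliftP ord_max i) => [j ->|->]; last by left.
by right; exists j; apply: val_inj; rewrite /= /bump leqNgt ltn_ord.
Qed.

Lemma farkas n m (v : 'I_m -> 'rV[R]_n) (y : 'rV[R]_n) :
  (exists l : 'I_m -> R, (forall i, 0 <= l i) /\ y = \sum_(i < m) l i *: v i) \/
  (exists z, (forall i, 0 <= dotv z (v i)) /\ dotv z y < 0).
Proof.
elim: m v y => [|m IH] v y.
  case: (eqVneq y 0) => [->|yn0].
    by left; exists (fun _ => 0); split => // ; rewrite big_ord0.
  right; exists (- y); split; first by case.
  by rewrite dotvNl oppr_lt0 dotv_gt0.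
pose v' := fun j : 'I_m => v (widen_ord (leqnSn m) j).
pose vm := v ord_max.
have sumE : forall (l : 'I_m.+1 -> R),
    \sum_(i < m.+1) l i *: v i =
    \sum_(j < m) l (widen_ord (leqnSn m) j) *: v' j + l ord_max *: vm.
  by move=> l; rewrite big_ord_recr.
case: (IH v' y) => [[l [l0 hl]]|[z [hz hzy]]].
  left; exists (ext l 0); split.
    by move=> i; case: (ord_cases i) => [->|[j ->]]; rewrite ?ext_max ?ext_widen.
  rewrite sumE ext_max scale0r addr0 hl; apply: eq_bigr => j _; by rewrite ext_widen.
case: (leP 0 (dotv z vm)) => hzm.
  right; exists z; split => // i; case: (ord_cases i) => [->|[j ->]] //; exact: hz.
set be := dotv z vm; set ga := dotv z y.
have be0 : be < 0 := hzm. have ga0 : ga < 0 := hzy.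
pose al := fun j => dotv z (v' j).
pose v'' := fun j => v' j - (al j / be) *: vm.
pose y'' := y - (ga / be) *: vm.
have ben0 : be != 0 by rewrite lt_eqF.
case: (IH v'' y'') => [[l [l0 hl]]|[z' [hz' hzy']]].
  left; pose mu := (ga - \sum_(j < m) l j * al j) / be.
  have mu0 : 0 <= mu.
    rewrite /mu ler_ndivlMr // mul0r subr_le0; apply: le_trans (ltW ga0) _.
    by apply: sumr_ge0 => j _; apply: mulr_ge0; [exact: l0 | exact: hz].
  exists (ext l mu); split.
    by move=> i; case: (ord_cases i) => [->|[j ->]]; rewrite ?ext_max ?ext_widen.
  rewrite sumE ext_max.
  under eq_bigr do rewrite ext_widen.
  have : y = y'' + (ga / be) *: vm by rewrite /y'' subrK.
  move=> ->; rewrite hl /v'' /mu /=.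
  under eq_bigr do rewrite scalerBr scalerA.
  rewrite sumrB -scaler_suml -addrA; congr (_ + _).
  rewrite -scaleNr -scalerDl; congr (_ *: _).
  rewrite mulrBl addrC; congr (_ - _); rewrite mulr_suml; apply: eq_bigr => j _; by rewrite mulrA.
right; exists (z' - (dotv z' vm / be) *: z); split.
  move=> i; case: (ord_cases i) => [->|[j ->]].
    by rewrite dotvBl dotvZl -/vm -/be mulrVK ?unitfE // subrr.
  have := hz' j; rewrite /v'' dotvBr dotvZr dotvBl dotvZl => h.
  apply: le_trans h _; rewrite /al /v' /= le_eqVlt; apply/orP; left; apply/eqP; ring.
move: hzy'; rewrite /y'' dotvBl dotvZl dotvBr dotvZr -/ga => h.
apply: le_lt_trans h; rewrite le_eqVlt; apply/orP; left; apply/eqP; ring.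
Qed.

Lemma sep_conv d m (p : 'I_m -> 'rV[R]_d) x :
  ~ conv p x -> exists a b, (forall i, dotv a (p i) <= b) /\ b < dotv a x.
Proof.
move=> nx; case: (farkas (fun i => liftv (p i)) (liftv x)) => [[l [l0 hl]]|[z [hz hzx]]].
  exfalso; apply: nx; exists l; split => //; split.
    have /rowP/(_ (rshift d 0)) := hl.
    rewrite summxE /liftv row_mxEr mxE => h; rewrite h; apply: eq_bigr => i _.
    by rewrite [RHS]mxE row_mxEr mxE mulr1.
  apply/rowP => j; have /rowP/(_ (lshift 1 j)) := hl.
  rewrite summxE /liftv row_mxEl => ->; rewrite summxE; apply: eq_bigr => i _.
  by rewrite [LHS]mxE [RHS]mxE row_mxEl.
rewrite (split_rV z) in hz hzx.
move: hzx; rewrite dotv_lift => hzx.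
exists (- lsubmx z), (rsubmx z 0 0); split.
  by move=> i; have := hz i; rewrite dotv_lift dotvNl => h; lra.
by rewrite dotvNl; lra.
Qed.

End P2.

Section P3.
Variable R : realType.
Variables (d m : nat) (p : 'I_m -> 'rV[R]_d).

Definition supp (a : 'rV[R]_d) b := forall i, dotv a (p i) <= b.
Definition tight_fam (a : 'rV[R]_d) b k (t : 'I_k -> 'I_m) :=
  aff_indep (fun j => p (t j)) /\ forall j, dotv a (p (t j)) = b.

Lemma aff_indep_eq n k (f g : 'I_k -> 'rV[R]_n) :
  (forall i, f i = g i) -> aff_indep f -> aff_indep g.
Proof.
move=> e hf c hs hv; apply: hf => //; rewrite -[RHS]hv.
by apply: eq_bigr => i _; rewrite e.
Qed.

Lemma conv_dot (a : 'rV[R]_d) b x : supp a b -> conv p x -> dotv a x <= b.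
Proof.
move=> hs [w [w0 [w1 ->]]]; rewrite dotv_comb.
rewrite -[b]mul1r -w1 mulr_suml; apply: ler_sum => i _.
by apply: ler_wpM2l.
Qed.

Lemma conv_dot_eq (a : 'rV[R]_d) b x : (forall i, dotv a (p i) = b) -> conv p x -> dotv a x = b.
Proof.
move=> hs [w [w0 [w1 ->]]]; rewrite dotv_comb.
rewrite -[b]mul1r -w1 mulr_suml; apply: eq_bigr => i _; by rewrite hs.
Qed.

Hypothesis HK : exists q : 'I_d.+1 -> 'rV[R]_d, aff_indep q /\ forall i, conv p (q i).

Lemma all_on_hyp (u : 'rV[R]_d) v : (forall i, dotv u (p i) = v) -> u = 0 /\ v = 0.
Proof.
move=> h; have [q [hq hqc]] := HK; apply: (hyp_trivial hq) => i.
exact: conv_dot_eq (hqc i).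
Qed.

Lemma m_pos : (0 < m)%N.
Proof.
have [q [_ hqc]] := HK; have [w [_ [w1 _]]] := hqc ord0.
by case: m p w w1 => // p' w; rewrite big_ord0 => /eqP; rewrite eq_sym oner_eq0.
Qed.

Lemma tighten_init x a b : supp a b -> b < dotv a x ->
  exists a' b' (t : 'I_1 -> 'I_m), supp a' b' /\ b' < dotv a' x /\ tight_fam a' b' t.
Proof.
move=> hs hx; have i0 : 'I_m by exists 0%N; exact: m_pos.
have := @arg_maxP _ R _ i0 xpredT (fun i => dotv a (p i)) isT.
case=> r _ hmax; exists a, (dotv a (p r)), (fun _ => r); split; last split.
- by move=> i; apply: hmax.
- by apply: le_lt_trans (hs r) hx.
- split => // c hc _ i; rewrite big_ord1 in hc; by rewrite (ord1 i).
Qed.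

Lemma tighten_step x a b k (t : 'I_k -> 'I_m) : (k < d)%N ->
  supp a b -> b < dotv a x -> tight_fam a b t ->
  exists a' b' (t' : 'I_k.+1 -> 'I_m), supp a' b' /\ b' < dotv a' x /\ tight_fam a' b' t'.
Proof.
move=> kd hs hx [hind htight].
have kd' : (k.+1 < d + 1)%N by rewrite addn1.
have [w [wn0 hw]] := kernel_exists (ext (fun j => liftv (p (t j))) (liftv x)) kd'.
have hwl : forall y, dotv w (liftv y) = dotv (lsubmx w) y + rsubmx w 0 0.
  by move=> y; rewrite {1}(split_rV w) dotv_lift.
set u := lsubmx w; set v := - rsubmx w 0 0.
have hut : forall j, dotv u (p (t j)) = v.
  move=> j; have := hw (widen_ord (leqnSn k) j); rewrite ext_widen hwl /v => h; lra.
have hux : dotv u x = v.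
  have := hw ord_max; rewrite ext_max hwl /v => h; lra.
have [i0 hi0] : exists i, dotv u (p i) != v.
  case: (classic (exists i, dotv u (p i) != v)) => [//|h].
  have [u0 v0] : u = 0 /\ v = 0.
    apply: all_on_hyp => i; apply/eqP/negPn/negP => H; apply: h; by exists i.
  move: wn0; rewrite (split_rV w) -/u u0.
  have -> : rsubmx w 0 0 = 0 by move: v0; rewrite /v => h'; lra.
  have -> : (const_mx 0 : 'rV[R]_1) = 0 by apply/rowP => i; rewrite !mxE.
  by rewrite row_mx_eq0 !eqxx.
have [u' [v' [hut' hux' [r0 hr0]]]] : exists u' v',
    [/\ forall j, dotv u' (p (t j)) = v', dotv u' x = v' & exists i, 0 < dotv u' (p i) - v'].
  case: (ltP v (dotv u (p i0))) => h.
    exists u, v; split => //; exists i0; lra.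
  exists (- u), (- v); split.
  - by move=> j; rewrite dotvNl hut.
  - by rewrite dotvNl hux.
  - exists i0; rewrite dotvNl; move: hi0; rewrite neq_lt => /orP[] h'; lra.
have hal0 : forall i, 0 <= b - dotv a (p i) by move=> i; have := hs i; lra.
have [r [s [der s0 alr hall]]] := ratio_test (de := fun i => dotv u' (p i) - v')
    hal0 (ex_intro _ r0 hr0).
exists (a + s *: u'), (b + s * v'), (ext t r); split; last split.
- move=> i; have := hall i; rewrite dotvDl dotvZl /=; nra.
- rewrite dotvDl dotvZl hux'; lra.
- split.
    apply: (@aff_indep_eq _ _ (ext (fun j => p (t j)) (p r))).
      by move=> i; case: (ord_cases i) => [->|[j ->]]; rewrite ?ext_max ?ext_widen.
    apply: (aff_indep_ext hind hut'); move: der => /= der; by rewrite -subr_eq0 gt_eqF.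
  move=> i; case: (ord_cases i) => [->|[j ->]]; rewrite ?ext_max ?ext_widen dotvDl dotvZl.
    move: alr => /= alr; nra.
  by rewrite hut' htight.
Qed.

Lemma facet_sep x : (0 < d)%N -> ~ conv p x ->
  exists a b (t : 'I_d -> 'I_m), supp a b /\ b < dotv a x /\ tight_fam a b t.
Proof.
move=> d0 nx; have [a [b [hs hx]]] := sep_conv nx.
suff H : forall k, (0 < k)%N -> (k <= d)%N -> exists a b (t : 'I_k -> 'I_m),
    supp a b /\ b < dotv a x /\ tight_fam a b t by exact: H.
elim=> [//|k IH] _ kd; case: k IH kd => [|k] IH kd.
  exact: (tighten_init hs hx).
have [a' [b' [t [h1 [h2 h3]]]]] := IH isT (ltnW kd).
exact: (tighten_step kd h1 h2 h3).
Qed.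

End P3.

Section P4a.
Variable R : realType.

Lemma hyper_unique n (q : 'I_n -> 'rV[R]_n) (a a' : 'rV[R]_n) b b' :
  aff_indep q -> a != 0 -> (forall j, dotv a (q j) = b) -> (forall j, dotv a' (q j) = b') ->
  exists c, a' = c *: a /\ b' = c * b.
Proof.
move=> hq an0 ha ha'.
have [e he] : exists e, dotv a e != b.
  case: (eqVneq b 0) => [->|bn0]; last by exists 0; rewrite dotv0r eq_sym.
  by exists a; rewrite gt_eqF // dotv_gt0.
pose c := (dotv a' e - b') / (dotv a e - b).
have hne : dotv a e - b != 0 by rewrite subr_eq0.
have hi := aff_indep_ext hq ha he.
have hall : forall i, dotv (a' - c *: a) (ext q e i) = b' - c * b.
  move=> i; case: (ord_cases i) => [->|[j ->]]; rewrite ?ext_max ?ext_widen dotvBl dotvZl.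
    rewrite /c; field; exact: hne.
  by rewrite ha ha'.
have [u0 v0] := hyp_trivial hi hall.
exists c; split; [by apply/eqP; rewrite -subr_eq0 u0 | by move: v0 => /eqP; rewrite subr_eq0 => /eqP].
Qed.

Lemma conv_pt d m (p : 'I_m -> 'rV[R]_d) i : conv p (p i).
Proof.
exists (fun j => (j == i)%:R); split; first by move=> j; rewrite ler0n.
split.
  by rewrite (bigD1 i) //= eqxx big1 ?addr0 // => j /negbTE ->.
by rewrite (bigD1 i) //= eqxx scale1r big1 ?addr0 // => j /negbTE ->; rewrite scale0r.
Qed.

End P4a.

Section P4.
Variable R : realType.
Variables (d m : nat) (p : 'I_m -> 'rV[R]_d).
Hypothesis HK : exists q : 'I_d.+1 -> 'rV[R]_d, aff_indep q /\ forall i, conv p (q i).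

Definition good (a : 'rV[R]_d) b := a != 0 /\ supp p a b /\ exists t : 'I_d -> 'I_m, tight_fam p a b t.

Lemma halfspace_unique a b a' b' (t : 'I_d -> 'I_m) :
  a != 0 -> a' != 0 -> supp p a b -> supp p a' b' -> tight_fam p a b t -> tight_fam p a' b' t ->
  exists c, 0 < c /\ a' = c *: a /\ b' = c * b.
Proof.
move=> an0 an0' hs hs' [hi ht] [_ ht'].
have [c [ea eb]] := hyper_unique hi an0 ht ht'.
exists c; split => //.
case: (ltgtP c 0) => hc //.
- exfalso; have [a0 _] : a = 0 /\ b = 0.
    apply: (all_on_hyp HK) => i; apply/eqP; rewrite eq_le hs /=.
    have := hs' i; rewrite ea eb dotvZl => h.
    by rewrite -(ler_nM2l hc).
  by rewrite a0 eqxx in an0.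
- by move: an0'; rewrite ea hc scale0r eqxx.
Qed.

Lemma outside_point : (0 < d)%N -> exists x0, ~ conv p x0.
Proof.
move=> d0; pose i0 : 'I_d := Ordinal d0.
pose B := \sum_i `|p i 0 i0|.
exists (const_mx (B + 1)) => [[w [w0 [w1 /rowP /(_ i0)]]]].
rewrite !mxE summxE => h.
have : \sum_i (w i *: p i) 0 i0 <= B.
  rewrite -[B]mul1r -w1 mulr_suml; apply: ler_sum => i _; rewrite mxE.
  apply: ler_wpM2l => //; apply: le_trans (ler_norm _) _.
  by rewrite /B (bigD1 i) //= lerDl; apply: sumr_ge0 => j _; exact: normr_ge0.
rewrite -h; lra.
Qed.

Lemma good_sep x : (0 < d)%N -> ~ conv p x ->
  exists a b (t : 'I_d -> 'I_m), good a b /\ tight_fam p a b t /\ b < dotv a x.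
Proof.
move=> d0 nx; have [a [b [t [hs [hx ht]]]]] := facet_sep HK d0 nx.
have an0 : a != 0.
  apply/eqP => a0; have i0 : 'I_m by exists 0%N; exact: m_pos HK.
  by have := hs i0; move: hx; rewrite a0 !dotv0l => h1 h2; clear -h1 h2; lra.
by exists a, b, t; split => //; split => //; split => //; exists t.
Qed.

Lemma facet_family : (0 < d)%N ->
  exists (fa : {ffun 'I_d -> 'I_m} -> 'rV[R]_d) (fb : {ffun 'I_d -> 'I_m} -> R),
    (forall t, good (fa t) (fb t)) /\ (forall x, ~ conv p x -> exists t, fb t < dotv (fa t) x).
Proof.
move=> d0; have [x0 nx0] := outside_point d0.
have [a0 [b0 [t0 [g0 _]]]] := good_sep d0 nx0.
have H : forall t : {ffun 'I_d -> 'I_m}, exists ab : 'rV[R]_d * R,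
    good ab.1 ab.2 /\ ((exists a b, good a b /\ tight_fam p a b t) -> tight_fam p ab.1 ab.2 t).
  move=> t; case: (classic (exists a b, good a b /\ tight_fam p a b t)) => [[a [b [g ht]]]|h].
    by exists (a, b); split.
  by exists (a0, b0); split => // h'; exfalso; apply: h.
have [f hf] := fin_all_exists H.
exists (fun t => (f t).1), (fun t => (f t).2); split; first by move=> t; case: (hf t).
move=> x nx; have [a [b [t [g [ht hx]]]]] := good_sep d0 nx.
pose t' := [ffun j => t j].
have ht' : tight_fam p a b t'.
  case: ht => h1 h2; split => [|j]; last by rewrite ffunE.
  by apply: (aff_indep_eq _ h1) => j; rewrite ffunE.
have [gf htf] := hf t'.
have := htf (ex_intro _ a (ex_intro _ b (conj g ht'))).
case: g => an0 [hs _]; case: gf => an0' [hs' _] htf'.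
have [c [c0 [ea eb]]] := halfspace_unique an0 an0' hs hs' ht' htf'.
exists t'; rewrite ea eb dotvZl ltr_pM2l //.
Qed.

Lemma good_facet (K : 'rV[R]_d -> Prop) a b : (forall x, K x <-> conv p x) -> good a b ->
  facet K (fun x => K x /\ dotv a x = b).
Proof.
move=> hK [an0 [hs [t [hi ht]]]]; exists a, b; split => //; split.
  by move=> x /hK; apply: conv_dot.
split => //; exists (fun j => p (t j)); split => // j; split => //; apply/hK; exact: conv_pt.
Qed.

End P4.

Section P5.
Variable R : realType.

Lemma conv_lower d m (p : 'I_m -> 'rV[R]_d) a y : conv p y ->
  - \sum_i `|dotv a (p i)| <= dotv a y.
Proof.
move=> [w [w0 [w1 ->]]]; rewrite dotv_comb.
rewrite -[X in X <= _]mul1r -w1 mulr_suml; apply: ler_sum => i _.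
apply: ler_wpM2l => //; rewrite lerNl; apply: le_trans (ler_norm _) _.
by rewrite normrN (bigD1 i) //= lerDl; apply: sumr_ge0 => j _.
Qed.

Lemma pos_span d m N (p : 'I_m -> 'rV[R]_d) (fa : 'I_N -> 'rV[R]_d) fb (i0 : 'I_m) :
  (forall x, (forall t, dotv (fa t) x <= fb t) -> conv p x) ->
  (forall x, conv p x -> forall t, dotv (fa t) x <= fb t) ->
  forall t0, exists l : 'I_N -> R, (forall t, 0 <= l t) /\ - fa t0 = \sum_t l t *: fa t.
Proof.
move=> hsep hK t0; case: (farkas fa (- fa t0)) => // [[z [hz hzy]]]; exfalso.
pose g y := dotv (fa t0) y; pose B := \sum_i `|dotv (fa t0) (p i)|.
pose c := p i0; have cK : conv p c by exact: conv_pt.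
have gc : - B <= g c by exact: conv_lower.
pose ze := dotv z (fa t0).
have ze0 : 0 < ze by move: hzy; rewrite dotvNr /ze; lra.
pose s := (g c + B + 1) / ze.
have s0 : 0 <= s by rewrite /s divr_ge0 //; [lra | exact: ltW].
have yK : conv p (c - s *: z).
  apply: hsep => t; rewrite dotvBr dotvZr.
  have := hK c cK t; have := hz t; rewrite dotvC => h1 h2.
  have : 0 <= s * dotv (fa t) z by apply: mulr_ge0.
  lra.
have := conv_lower (fa t0) yK; rewrite dotvBr dotvZr -/B.
have -> : s * dotv (fa t0) z = g c + B + 1.
  by rewrite /s dotvC -/ze mulfVK // gt_eqF.
rewrite /g; lra.
Qed.

Definition rep d N (fa : 'I_N -> 'rV[R]_d) (y : 'rV[R]_d) k :=
  exists (e : 'I_k -> 'I_N) (l : 'I_k -> R), (forall j, 0 <= l j) /\ y = \sum_j l j *: fa (e j).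

Lemma rep_drop d N (fa : 'I_N -> 'rV[R]_d) y k (e : 'I_k.+1 -> 'I_N) (l : 'I_k.+1 -> R) j :
  (forall j, 0 <= l j) -> y = \sum_j l j *: fa (e j) -> l j = 0 -> rep fa y k.
Proof.
move=> l0 hy lj; exists (fun i => e (lift j i)), (fun i => l (lift j i)); split => //.
by rewrite hy (bigD1_ord j) //= lj scale0r add0r.
Qed.

Lemma caratheodory d N (fa : 'I_N -> 'rV[R]_d) y : y != 0 ->
  (exists l : 'I_N -> R, (forall t, 0 <= l t) /\ y = \sum_t l t *: fa t) ->
  exists k (e : 'I_k -> 'I_N) (l : 'I_k -> R), [/\ (0 < k)%N, (forall j, 0 < l j),
    y = \sum_j l j *: fa (e j) &
    forall mu : 'I_k -> R, \sum_j mu j *: fa (e j) = 0 -> forall j, mu j = 0].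
Proof.
move=> yn0 [l00 [hl00 hy00]].
suff H : forall n k, (k <= n)%N -> rep fa y k -> exists k (e : 'I_k -> 'I_N) (l : 'I_k -> R),
    [/\ (0 < k)%N, (forall j, 0 < l j), y = \sum_j l j *: fa (e j) &
    forall mu : 'I_k -> R, \sum_j mu j *: fa (e j) = 0 -> forall j, mu j = 0].
  by apply: (H N N) => //; exists id, l00.
elim=> [|n IH] k kn [e [l [l0 hy]]].
  move: kn; rewrite leqn0 => /eqP k0; subst k.
  by move: yn0; rewrite hy big_ord0 eqxx.
case: k kn e l l0 hy => [|k] kn e l l0 hy.
  by move: yn0; rewrite hy big_ord0 eqxx.
case: (classic (exists j, l j = 0)) => [[j lj]|nz].
  by apply: (IH k) => //; exact: (rep_drop l0 hy lj).
have lpos : forall j, 0 < l j.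
  move=> j; rewrite lt_def l0 andbT; apply/eqP => h; apply: nz; by exists j.
case: (classic (forall mu : 'I_k.+1 -> R, \sum_j mu j *: fa (e j) = 0 -> forall j, mu j = 0)) => [ind|dep].
  by exists k.+1, e, l; split.
have [mu [hmu [j0 hj0]]] : exists mu : 'I_k.+1 -> R, \sum_j mu j *: fa (e j) = 0 /\ exists j, mu j != 0.
  apply: NNPP => H; apply: dep => mu hmu j; apply/eqP/negPn/negP => hj.
  by apply: H; exists mu; split => //; exists j.
have [nu [hnu [j1 hj1]]] : exists nu : 'I_k.+1 -> R, \sum_j nu j *: fa (e j) = 0 /\ exists j, 0 < nu j.
  case: (ltP 0 (mu j0)) => h; first by exists mu; split => //; exists j0.
  exists (fun j => - mu j); split.
    by under eq_bigr do rewrite scaleNr; rewrite sumrN hmu oppr0.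
  by exists j0; rewrite oppr_gt0 lt_neqAle hj0 h.
have [r [s [nur s0 lr hall]]] := ratio_test (de := nu) l0 (ex_intro _ j1 hj1).
apply: (IH k) => //; apply: (@rep_drop _ _ _ _ _ e (fun j => l j - s * nu j) r).
- by move=> j; have := hall j; rewrite subr_ge0.
- rewrite hy; under [RHS]eq_bigr do rewrite scalerBl -scalerA.
  by rewrite sumrB -scaler_sumr hnu scaler0 subr0.
- by rewrite lr subrr.
Qed.

Lemma indep_le d k (a : 'I_k -> 'rV[R]_d) :
  (forall mu : 'I_k -> R, \sum_j mu j *: a j = 0 -> forall j, mu j = 0) -> (k <= d)%N.
Proof.
move=> hind; have rf : row_free (rowsmx a).
  apply: row_free_of => c; rewrite mul_rowsmx => hc.
  by apply/rowP => j; rewrite mxE (hind (fun j => c 0 j) hc j).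
by move: rf; rewrite /row_free => /eqP <-; apply: rank_leq_col.
Qed.

End P5.

Section P6.
Variable R : realType.

Section Simplex.
Variables (k : nat) (lam bb : 'I_k -> R) (b0 : R).
Hypothesis lam0 : forall j, 0 < lam j.
Let D := b0 + \sum_j lam j * bb j.
Hypothesis D0 : 0 < D.

Definition sA (y : 'rV[R]_k) := (forall j, y 0 j <= bb j) /\ - \sum_j lam j * y 0 j <= b0.
Definition sv (i : 'I_k.+1) : 'rV[R]_k :=
  \row_j (bb j - (if (j == i :> nat) then D / lam j else 0)).

Lemma svE (w : 'I_k.+1 -> R) j :
  (\sum_i w i *: sv i) 0 j = bb j * \sum_i w i - w (widen_ord (leqnSn k) j) * (D / lam j).
Proof.
rewrite summxE.
under eq_bigr do rewrite !mxE mulrBr.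
rewrite sumrB mulr_sumr; congr (_ - _); first by apply: eq_bigr => i _; rewrite mulrC.
rewrite (bigD1 (widen_ord (leqnSn k) j)) //= eqxx big1 ?addr0 // => i /negbTE ij.
have -> : (j == i :> nat) = false by rewrite -ij eq_sym.
by rewrite mulr0.
Qed.

Lemma sv_indep : aff_indep sv.
Proof.
move=> c hs hv.
have hc : forall j : 'I_k, c (widen_ord (leqnSn k) j) = 0.
  move=> j; have /rowP/(_ j) := hv; rewrite svE hs mulr0 add0r mxE => /eqP.
  rewrite oppr_eq0 mulf_eq0 => /orP[/eqP //|].
  by rewrite mulf_eq0 invr_eq0 (gt_eqF D0) (gt_eqF (lam0 j)).
move=> i; case: (ord_cases i) => [->|[j ->]]; last exact: hc.
move: hs; rewrite big_ord_recr /= big1 ?add0r // => j _; exact: hc.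
Qed.

Lemma sA_conv y : sA y <-> conv sv y.
Proof.
split.
  move=> [hb hl]; pose z j := bb j - y 0 j.
  have hz : \sum_j lam j * z j <= D.
    rewrite /D /z; under eq_bigr do rewrite mulrBr; rewrite sumrB; lra.
  exists (ext (fun j => lam j * z j / D) (1 - \sum_j lam j * z j / D)); split; last split.
  - move=> i; case: (ord_cases i) => [->|[j ->]]; rewrite ?ext_max ?ext_widen.
      by rewrite subr_ge0 -mulr_suml ler_pdivrMr // mul1r.
    by rewrite divr_ge0 ?(ltW D0) // mulr_ge0 ?(ltW (lam0 j)) // subr_ge0.
  - by rewrite sum_ext [_ + (1 - _)]addrC subrK.
  - apply/rowP => j; rewrite svE sum_ext [_ + (1 - _)]addrC subrK mulr1 ext_widen.
    rewrite /z; field; by rewrite (gt_eqF (lam0 j)) (gt_eqF D0).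
move=> [w [w0 [w1 ->]]]; split.
  move=> j; rewrite svE w1 mulr1 gerBl mulr_ge0 // divr_ge0 ?(ltW D0) ?(ltW (lam0 j)) //.
have -> : \sum_j lam j * (\sum_i w i *: sv i) 0 j
    = \sum_j lam j * bb j - D * \sum_j w (widen_ord (leqnSn k) j).
  rewrite mulr_sumr -sumrB; apply: eq_bigr => j _; rewrite svE w1 mulr1.
  by field; rewrite (gt_eqF (lam0 j)).
have : \sum_j w (widen_ord (leqnSn k) j) <= 1.
  by rewrite -w1 big_ord_recr /= lerDl; exact: w0.
have := D0; rewrite /D => h1 h2.
have : D * \sum_j w (widen_ord (leqnSn k) j) <= D by rewrite -[X in _ <= X]mulr1 ler_pM2l.
rewrite /D; lra.
Qed.

Lemma sA_simplex : full_simplex sA.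
Proof. by exists sv; split; [exact: sv_indep | exact: sA_conv]. Qed.

End Simplex.

Lemma dotv_sumrI n (I : finType) (F : I -> 'rV[R]_n) x :
  dotv x (\sum_(f : I) F f) = \sum_(f : I) dotv x (F f).
Proof.
rewrite /dotv exchange_big /=; apply: eq_bigr => j _.
by rewrite summxE mulr_sumr.
Qed.

Lemma facet_poly n (I : finType) (f0 : I) (h : I -> 'rV[R]_n) (c : I -> R) (P G : 'rV[R]_n -> Prop) :
  (forall y, P y <-> forall f, dotv (h f) y <= c f) -> (forall f, h f != 0) ->
  facet P G -> exists f, forall y, P y -> dotv (h f) y = c f -> G y.
Proof.
move=> hP hn0 [a [b [an0 [hsup [hG [q [hq hqG]]]]]]].
have [f hf] : exists f, forall y, G y -> dotv (h f) y = c f.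
  apply: NNPP => H.
  have H' : forall f, exists y, G y /\ dotv (h f) y < c f.
    move=> f; apply: NNPP => H2; apply: H; exists f => y Gy.
    have := (proj1 (hP y) (proj1 (proj1 (hG y) Gy))) f => hle.
    apply/eqP; rewrite eq_le hle /=; rewrite leNgt; apply/negP => hlt.
    by apply: H2; exists y.
  have [g hg] := fin_all_exists H'.
  pose N := #|I|; have N0 : (0 < N)%N by apply/card_gt0P; exists f0.
  pose r := \sum_f (N%:R^-1) *: g f.
  have hsum : forall (F : I -> R), \sum_(f : I) N%:R^-1 * F f = N%:R^-1 * \sum_f F f.
    by move=> F; rewrite mulr_sumr.
  have Nr : 0 < N%:R^-1 :> R by rewrite invr_gt0 ltr0n.
  have hr : forall u, dotv u r = N%:R^-1 * \sum_f dotv u (g f).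
    move=> u; rewrite /r dotv_sumrI -hsum; apply: eq_bigr => f _; by rewrite dotvZr.
  have ar : dotv a r = b.
    rewrite hr; under eq_bigr do rewrite (proj2 (proj1 (hG _) (proj1 (hg _)))).
    by rewrite sumr_const -/N -[b *+ N]mulr_natr mulrCA mulVf ?mulr1 // pnatr_eq0 -lt0n.
  have hrs : forall f', dotv (h f') r < c f'.
    move=> f'; rewrite hr.
    have : \sum_f dotv (h f') (g f) < \sum_(f : I) c f'.
      rewrite (bigD1 f') //= [X in _ < X](bigD1 f') //=.
      apply: ltr_leD; first exact: (proj2 (hg f')).
      apply: ler_sum => f _; exact: (proj1 (hP _) (proj1 (proj1 (hG _) (proj1 (hg f))))).
    rewrite sumr_const -/N => h1.
    have hN : N%:R^-1 * (c f' *+ N) = c f' by rewrite -[c f' *+ N]mulr_natr mulrCA mulVf ?mulr1 // pnatr_eq0 -lt0n.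
    by rewrite -[X in _ < X]hN ltr_pM2l.
  have hsl : forall f, 0 < (c f - dotv (h f) r) / (`|dotv (h f) a| + 1).
    move=> f; apply: divr_gt0; first by rewrite subr_gt0.
    by apply: ltr_pwDr => //; exact: normr_ge0.
  have [e [e0 he]] := pos_lower hsl.
  have hPr : P (r + e *: a).
    apply/hP => f; rewrite dotvDr dotvZr.
    have := he f; rewrite ler_pdivlMr; last by apply: ltr_pwDr => //; exact: normr_ge0.
    move=> Hf; have : e * dotv (h f) a <= e * `|dotv (h f) a| by apply: ler_wpM2l; [exact: ltW | exact: ler_norm].
    have := hrs f; nra.
  have := hsup _ hPr; rewrite dotvDr dotvZr ar => Hs.
  have := mulr_gt0 e0 (dotv_gt0 an0); lra.
exists f => y Py hy; apply/hG; split => //.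
have ha : forall j, dotv a (q j) = b by move=> j; exact: (proj2 (proj1 (hG _) (hqG j))).
have hh : forall j, dotv (h f) (q j) = c f by move=> j; exact: hf (hqG j).
have [c' [e1 e2]] := hyper_unique hq an0 ha hh.
have c'0 : c' != 0 by apply/eqP => c0; move: (hn0 f); rewrite e1 c0 scale0r eqxx.
by apply: (mulfI c'0); rewrite -e2 -hy e1 dotvZl.
Qed.

End P6.

Section P7a.
Variable R : realType.

Lemma conv_transport n (L : 'M[R]_n) (A : 'rV[R]_n -> Prop) (v : 'I_n.+1 -> 'rV[R]_n) :
  L \in unitmx -> aff_indep v -> (forall y, A y <-> conv v y) ->
  full_simplex (fun x => A (x *m L)).
Proof.
move=> uL hv hA; exists (fun i => v i *m invmx L); split.
  move=> c hs hc; apply: hv => //.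
  have : (\sum_i c i *: (v i *m invmx L)) *m L = 0 by rewrite hc mul0mx.
  rewrite mulmx_suml => h; rewrite -[RHS]h; apply: eq_bigr => i _.
  by rewrite -scalemxAl mulmxKV.
move=> x; rewrite hA; split => [[w [w0 [w1 hw]]]|[w [w0 [w1 hw]]]]; exists w; do 2!split => //.
  rewrite -[x](mulmxK uL) hw mulmx_suml; apply: eq_bigr => i _; by rewrite scalemxAl.
rewrite hw mulmx_suml; apply: eq_bigr => i _; by rewrite -scalemxAl mulmxKV.
Qed.

Definition delta_row n (j : 'I_n) : 'rV[R]_n := \row_i (i == j)%:R.

Lemma dotv_delta n (j : 'I_n) y : dotv (delta_row j) y = y 0 j.
Proof.
rewrite /dotv (bigD1 j) //= !mxE eqxx mul1r big1 ?addr0 // => i /negbTE ij.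
by rewrite !mxE ij mul0r.
Qed.

Lemma delta_row_neq0 n (j : 'I_n) : delta_row j != 0.
Proof. by apply/negP => /eqP/rowP/(_ j); rewrite !mxE eqxx => /eqP; rewrite oner_eq0. Qed.

Lemma dotv_lamrow n (lam : 'I_n -> R) y : dotv (\row_i lam i) y = \sum_i lam i * y 0 i.
Proof. by apply: eq_bigr => i _; rewrite mxE. Qed.

End P7a.

Section P8.
Variable R : realType.
Variables (d m : nat) (p : 'I_m -> 'rV[R]_d) (K : 'rV[R]_d -> Prop).
Hypothesis hK : forall x, K x <-> conv p x.
Hypothesis HK : exists q : 'I_d.+1 -> 'rV[R]_d, aff_indep q /\ forall i, conv p (q i).
Variables (N : nat) (fa : 'I_N -> 'rV[R]_d) (fb : 'I_N -> R).
Hypothesis hgood : forall t, good p (fa t) (fb t).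
Hypothesis hsep : forall x, ~ conv p x -> exists t, fb t < dotv (fa t) x.

Lemma piece t0 : exists S : 'rV[R]_d -> Prop,
  [/\ good_piece K S, forall x, K x -> S x & forall x, S x -> dotv (fa t0) x <= fb t0].
Proof.
have i0 : 'I_m by exists 0%N; exact: m_pos HK.
have hsep' : forall x, (forall t, dotv (fa t) x <= fb t) -> conv p x.
  move=> x hx; apply: NNPP => nx; have [t ht] := hsep nx; have := hx t; lra.
have hKd : forall x, conv p x -> forall t, dotv (fa t) x <= fb t.
  by move=> x hx t; case: (hgood t) => _ [hs _]; exact: conv_dot hs hx.
have [l [l0 hl]] := pos_span i0 hsep' hKd t0.
have fn0 : fa t0 != 0 by case: (hgood t0).
have yn0 : - fa t0 != 0 by rewrite oppr_eq0.
have [k [e [lam [k0 lam0 hrep hind]]]] := caratheodory yn0 (ex_intro _ l (conj l0 hl)).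
have kd := indep_le hind.
pose bb := fun j => fb (e j); pose b0 := fb t0.
pose L := (rowsmx (fun j => fa (e j)))^T.
have hxL : forall x j, (x *m L) 0 j = dotv (fa (e j)) x.
  move=> x j; rewrite mxE dotvC; apply: eq_bigr => i _; by rewrite !mxE.
have hfa0 : forall x, dotv (fa t0) x = - \sum_j lam j * dotv (fa (e j)) x.
  move=> x; rewrite -[fa t0]opprK hrep dotvNl dotv_suml; congr (- _).
  by apply: eq_bigr => j _; rewrite dotvZl.
pose S x := (forall j, dotv (fa (e j)) x <= bb j) /\ dotv (fa t0) x <= b0.
have hSA : forall x, S x <-> sA lam bb b0 (x *m L).
  move=> x; rewrite /S /sA.
  have -> : - \sum_j lam j * (x *m L) 0 j = dotv (fa t0) x.
    by rewrite hfa0; congr (- _); apply: eq_bigr => j _; rewrite hxL.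
  by split => -[h1 h2]; split => // j; [rewrite hxL | rewrite -hxL]; exact: h1.
have hKS : forall x, K x -> S x.
  by move=> x /hK hx; split => [j|]; apply: hKd.
have hlow : forall x, conv p x -> - \sum_j lam j * bb j <= dotv (fa t0) x.
  move=> x hx; rewrite hfa0 lerN2; apply: ler_sum => j _.
  by apply: ler_wpM2l; [exact: ltW | exact: hKd].
have D0 : 0 < b0 + \sum_j lam j * bb j.
  have hD : 0 <= b0 + \sum_j lam j * bb j.
    have := hlow _ (conv_pt p i0); have := hKd _ (conv_pt p i0) t0; rewrite -/b0; lra.
  rewrite lt_def hD andbT; apply/eqP => hD0.
  have [] := all_on_hyp HK (u := fa t0) (v := b0).
    move=> i; apply/eqP; rewrite eq_le (hKd _ (conv_pt p i) t0) /=.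
    have := hlow _ (conv_pt p i); lra.
  by move=> h0; move: fn0; rewrite h0 eqxx.
have fK : forall t, facet K (fun x => K x /\ dotv (fa t) x = fb t).
  by move=> t; apply: (good_facet hK (hgood t)).
have rk : \rank (rowsmx (fun j => fa (e j))) = k.
  apply/eqP; apply: row_free_of => c; rewrite mul_rowsmx => hc.
  by apply/rowP => j; rewrite mxE (hind (fun j => c 0 j) hc j).
have hkd : (k < d)%N \/ k = d by case: (ltngtP k d) => h; [left|move: kd; rewrite leqNgt h|right].
exists S; split => //; last by move=> x [].
case: hkd => [kd'|ekd].
  right; exists k, L, (sA lam bb b0); split => //; split => //.
  split; first by rewrite /L mxrank_tr rk.
  split; first exact: sA_simplex lam0 D0.
  split; first exact: hSA.
  move=> G hG.
  pose h := fun f : option 'I_k => if f is Some j then delta_row R j else - \row_i lam i.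
  pose c := fun f : option 'I_k => if f is Some j then bb j else b0.
  have hP : forall y, sA lam bb b0 y <-> forall f, dotv (h f) y <= c f.
    move=> y; split.
      by move=> [h1 h2] [j|]; rewrite /h /c ?dotv_delta ?dotvNl ?dotv_lamrow.
    move=> H; split; first by move=> j; have := H (Some j); rewrite /h dotv_delta.
    by have := H None; rewrite /h dotvNl dotv_lamrow.
  have hn0 : forall f, h f != 0.
    case=> [j|]; first exact: delta_row_neq0.
    rewrite oppr_eq0; apply/negP => /eqP/rowP/(_ (Ordinal k0)); rewrite !mxE => h0.
    by have := lam0 (Ordinal k0); rewrite h0 ltxx.
  have [f hf] := facet_poly None hP hn0 hG.
  pose tf := if f is Some j then e j else t0.
  exists (fun x => K x /\ dotv (fa tf) x = fb tf); split; first exact: fK.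
  move=> x [Kx hx]; apply: hf; first by apply/hSA; exact: hKS.
  case: f @tf hx => [j|] /= hx; first by rewrite dotv_delta hxL.
  by rewrite dotvNl dotv_lamrow; under eq_bigr do rewrite hxL; rewrite -hfa0.
subst k; left; split.
  have uL : L \in unitmx by rewrite -row_free_unit /row_free /L mxrank_tr rk.
  have [v [hv hvA]] := sA_simplex lam0 D0.
  have [w [hw hwS]] := conv_transport uL hv hvA.
  by exists w; split => // x; rewrite hSA.
move=> G hG.
pose h := fun f : option 'I_d => if f is Some j then fa (e j) else fa t0.
pose c := fun f : option 'I_d => if f is Some j then bb j else b0.
have hP : forall y, S y <-> forall f, dotv (h f) y <= c f.
  move=> y; split; first by move=> [h1 h2] [j|]; rewrite /h /c; [exact: h1 | exact: h2].
  by move=> H; split; [move=> j; exact: H (Some j) | exact: H None].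
have hn0 : forall f, h f != 0 by case=> [j|] //; case: (hgood (e j)).
have [f hf] := facet_poly None hP hn0 hG.
pose tf := if f is Some j then e j else t0.
exists (fun x => K x /\ dotv (fa tf) x = fb tf); split; first exact: fK.
move=> x [Kx hx]; apply: hf; first exact: hKS.
by case: f @tf hx.
Qed.

End P8.

Unset Implicit Arguments.
Theorem theorem4p5 (R : realType) (d : nat) (K : 'rV[R]_d -> Prop) :
  polytope K -> dim_ge d K ->
  exists (M : nat) (S : 'I_M -> 'rV[R]_d -> Prop),
    (forall x, K x <-> forall j, S j x) /\
    (forall j, good_piece K (S j)).
Proof.
move=> [m [p hK]] [q [hq hqK]].
have HK : exists q : 'I_d.+1 -> 'rV[R]_d, aff_indep q /\ forall i, conv p (q i).
  by exists q; split => // i; apply/hK.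
case: (posnP d) => [d0|d0].
  subst d; exists 0%N, (fun _ _ => True); split; last by move=> [].
  move=> x; split => // _; have -> : x = q ord0 by apply/rowP => [[]].
  exact: hqK.
have [fa0 [fb0 [hg hs]]] := facet_family HK d0.
pose T := {ffun 'I_d -> 'I_m}.
pose fa := fun i : 'I_#|T| => fa0 (enum_val i).
pose fb := fun i : 'I_#|T| => fb0 (enum_val i).
have hg' : forall i, good p (fa i) (fb i) by move=> i; exact: hg.
have hs' : forall x, ~ conv p x -> exists i, fb i < dotv (fa i) x.
  move=> x nx; have [t ht] := hs x nx; exists (enum_rank t).
  by rewrite /fa /fb enum_rankK.
have [S hS] := fin_all_exists (piece hK HK hg' hs').
exists #|T|, S; split; last by move=> j; case: (hS j).
move=> x; split; first by move=> Kx j; case: (hS j) => _ h _; exact: h.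
move=> hx; apply/hK; apply: NNPP => nx; have [i hi] := hs' x nx.
case: (hS i) => _ _ h; have := h x (hx i); lra.
Qed.
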